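(* Let $\varphi$ be a quantifier-free formula in the SMT theory of floating-point numbers and $\mathit{cost}$ a floating-point variable occurring in $\varphi$, of sort with $e$ exponent bits and $s$ significand bits (including the hidden bit), so that $\mathit{cost}$ is a vector of $n=e+s$ bits. Let $\varphi_{\mathrm{noNaN}}:=\varphi\wedge\neg\mathrm{isNaN}(\mathit{cost})$ be satisfiable, and consider the minimization (resp. maximization) of $\mathit{cost}$ subject to $\varphi_{\mathrm{noNaN}}$. Let $k\in[0..n-1]$, let $\tau_k$ be an assignment to $\mathit{cost}[0],\dots,\mathit{cost}[k-1]$, and let $d$ be the dynamic attractor for $\mathit{cost}$ with respect to $\tau_k$. Let $\tau_{k+1}:=\tau_k\cup\{\mathit{cost}[k]:=d[k]\}$ and $\tau'_{k+1}:=\tau_k\cup\{\mathit{cost}[k]:=\overline{d[k]}\}$, and let $\mathcal{M},\mathcal{M}'$ be models of $\varphi_{\mathrm{noNaN}}$ extending $\tau_{k+1}$ and $\tau'_{k+1}$ respectively. Then $\mathcal{M}(\mathit{cost})\le\mathcal{M}'(\mathit{cost})$ (resp. $\mathcal{M}(\mathit{cost})\ge\mathcal{M}'(\mathit{cost})$).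
   Context: Bits are indexed from the most significant bit $\mathit{cost}[0]$ to the least significant $\mathit{cost}[n-1]$; $\mathit{cost}[0]$ is the sign bit $\sigma$, $\mathit{cost}[1..e]$ is the exponent $E$ (read as an unsigned integer) and $\mathit{cost}[e+1..n-1]$ is the stored significand $m$ of $s-1$ bits. With bias $b=2^{e-1}-1$, IEEE 754-2008 semantics: if $E$ is all ones and $m=0$ the value is $+\infty$ or $-\infty$ according to $\sigma$; if $E$ is all ones and $m\ne0$ the value is NaN; if $E=0$ the value is the subnormal $(-1)^\sigma 2^{1-b}(0.m)_2$; otherwise it is the normal $(-1)^\sigma 2^{E-b}(1.m)_2$. The order $\le$ is the usual total order on non-NaN floating-point values (real order extended by $\pm\infty$, with $+0$ and $-0$ equal). The dynamic attractor for $\mathit{cost}$ with respect to an assignment $\tau_k$ to its $k$ most significant bits is the smallest (resp., when maximizing, largest) floating-point value different from NaN whose $k$ most significant bits coincide with those assigned by $\tau_k$; $d[k]$ denotes its $k$-th bit and $\overline{d[k]}$ the complement bit. *)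

(* Defs.v *)
From mathcomp Require Import all_boot all_order all_algebra.

Import Order.TTheory GRing.Theory Num.Theory.
Local Open Scope ring_scope.

Definition bits_to_nat (x : seq bool) : nat :=
  foldl (fun acc (b : bool) => (acc.*2 + b)%N) 0%N x.

(* floating-point values: finite rationals (both zeros are 0), signed infinities, NaN.
   FPinf true = -oo, FPinf false = +oo *)
Inductive fpval := FPfin of rat | FPinf of bool | FPnan.

(* Decoding of a bit vector x = cost[0..n-1], n = e + s:
   x[0] sign, x[1..e] exponent E, x[e+1..n-1] stored significand m (s-1 bits). *)
Definition fp_value (e s : nat) (x : seq bool) : fpval :=
  let sg := nth false x 0 in
  let E := bits_to_nat (take e (drop 1 x)) in
  let m := bits_to_nat (drop e.+1 x) in
  let b : int := (2 ^ e.-1)%:Z - 1 in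
  let sgn : rat := (-1) ^+ sg in
  let frac : rat := m%:R / (2 ^ s.-1)%:R in
  if E == (2 ^ e).-1 then (if m == 0%N then FPinf sg else FPnan)
  else if E == 0%N then FPfin (sgn * ((2%:R : rat) ^ (1 - b)) * frac)
  else FPfin (sgn * ((2%:R : rat) ^ (E%:Z - b)) * (1 + frac)).

Definition is_nan (v : fpval) : bool := if v is FPnan then true else false.

Definition fp_le (u v : fpval) : bool :=
  match u, v with
  | FPnan, _ | _, FPnan => false
  | FPinf true, _ => true
  | _, FPinf false => true
  | FPinf false, _ => false
  | _, FPinf true => false
  | FPfin a, FPfin b => a <= b
  end.

Definition fp_better (maximize : bool) (u v : fpval) : bool :=
  if maximize then fp_le v u else fp_le u v.

Definition agrees_prefix (x : seq bool) (tau : seq bool) : Prop :=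
  take (size tau) x = tau.

Definition is_dyn_attractor (e s : nat) (maximize : bool) (tau : seq bool)
    (d : (e + s).-tuple bool) : Prop :=
  [/\ ~~ is_nan (fp_value e s d), agrees_prefix d tau &
      forall y : (e + s).-tuple bool, ~~ is_nan (fp_value e s y) ->
        agrees_prefix y tau -> fp_better maximize (fp_value e s d) (fp_value e s y)].

(* Main.v *)
Require Import Defs.
From mathcomp Require Import all_boot all_order all_algebra.
From mathcomp Require Import zify ring lra.
Import Order.TTheory GRing.Theory Num.Theory.

Lemma foldl_bits a q : foldl (fun acc (b : bool) => (acc.*2 + b)%N) a q
  = (a * 2 ^ size q + bits_to_nat q)%N.
Proof.
elim: q a => [|b q IH] a; first by rewrite /bits_to_nat /= muln1 addn0.
rewrite /bits_to_nat /= !IH /= expnS -!mul2n. case: b => /=; lia.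
Qed.

Lemma bits_cons b q : bits_to_nat (b :: q) = (b * 2 ^ size q + bits_to_nat q)%N.
Proof. by rewrite {1}/bits_to_nat /= foldl_bits. Qed.

Lemma bits_cat p q : bits_to_nat (p ++ q) = (bits_to_nat p * 2 ^ size q + bits_to_nat q)%N.
Proof. by rewrite {1}/bits_to_nat foldl_cat foldl_bits. Qed.

Lemma bits_lt q : (bits_to_nat q < 2 ^ size q)%N.
Proof.
elim: q => [|b q IH]; first by [].
rewrite bits_cons /= expnS. case: b => /=; lia.
Qed.

Lemma bits_lex u v j : size u = size v -> (j < size u)%N -> take j u = take j v ->
  nth false u j = false -> nth false v j = true -> (bits_to_nat u < bits_to_nat v)%N.
Proof.
move=> suv hj htk hu hv.
rewrite -(cat_take_drop j u) -(cat_take_drop j v) htk.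
rewrite (drop_nth false hj) (drop_nth false (n:=j)) -?suv // hu hv !bits_cat !bits_cons /=.
have e1 : size (drop j.+1 u) = size (drop j.+1 v) by rewrite !size_drop suv.
have := bits_lt (drop j.+1 u). rewrite e1.
set A := bits_to_nat (take j v). set B := bits_to_nat (drop j.+1 u).
set C := bits_to_nat (drop j.+1 v). set t := (2 ^ size (drop j.+1 v))%N.
move=> h; rewrite ltn_add2l; lia.
Qed.

Definition fE e (x : seq bool) := bits_to_nat (take e (drop 1 x)).
Definition fM e (x : seq bool) := bits_to_nat (drop e.+1 x).
Definition fF (P E m : nat) : nat := if E == 0%N then m else (2 ^ E.-1 * (P + m))%N.
Definition cst e s : rat := ((2%:R : rat) ^ (1 - ((2 ^ e.-1)%:Z - 1)) / (2 ^ s.-1)%:R)%R.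

Local Open Scope ring_scope.

Lemma decode e s x : fp_value e s x =
  if fE e x == (2^e).-1 then (if fM e x == 0%N then FPinf (nth false x 0) else FPnan)
  else FPfin ((-1) ^+ (nth false x 0) * cst e s * (fF (2 ^ s.-1) (fE e x) (fM e x))%:R).
Proof.
rewrite /fp_value -/(fE e x) -/(fM e x).
case: ifP => // _. rewrite /fF /cst.
have P0 : ((2 ^ s.-1)%:R : rat) != 0 by rewrite pnatr_eq0 expn_eq0.
have key : forall (E : nat) (b : int), (0 < E)%N -> (E%:Z - b) = (1 - b) + (E.-1)%:Z.
  move=> E b h; rewrite -[in LHS](prednK h) -addn1 PoszD; ring.
case: ifP => E0; congr FPfin; first by ring.
move/negbT: E0; rewrite -lt0n => h.
rewrite key // expfzDr ?pnatr_eq0 // -exprnP natrM natrD !natrX.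
have P1 : (2 : rat) ^+ s.-1 != 0 by rewrite expf_neq0.
move: P1; set z := (2 : rat) ^ _; set p := (2 : rat) ^+ s.-1; move=> P1.
by field.
Qed.

Local Close Scope ring_scope.

Lemma Nsplit e s (x : seq bool) : size x = (e + s)%N ->
  bits_to_nat (drop 1 x) = (fE e x * 2 ^ s.-1 + fM e x)%N.
Proof.
move=> sz; rewrite -{1}(cat_take_drop e (drop 1 x)) bits_cat drop_drop size_drop /fE /fM addn1.
by congr (_ * 2 ^ _ + _)%N; rewrite sz; lia.
Qed.

Lemma Mlt e s (x : seq bool) : size x = (e + s)%N -> (fM e x < 2 ^ s.-1)%N.
Proof.
move=> sz; have := bits_lt (drop e.+1 x); rewrite size_drop sz /fM.
by have -> : (e + s - e.+1 = s.-1)%N by lia.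
Qed.

Lemma Elt e s (x : seq bool) : (0 < s)%N -> size x = (e + s)%N -> (fE e x < 2 ^ e)%N.
Proof.
move=> s0 sz; have := bits_lt (take e (drop 1 x)); rewrite size_take size_drop sz /fE.
by have -> : (if e < e + s - 1 then e else e + s - 1)%N = e by case: ifP; lia.
Qed.

Lemma Fmono P Ex mx Ey my : (0 < P)%N -> (mx < P)%N -> (my < P)%N ->
  (Ex * P + mx < Ey * P + my)%N -> (fF P Ex mx < fF P Ey my)%N.
Proof.
move=> P0 hx hy hN.
have up : forall E m, (m < P)%N -> (fF P E m < 2 ^ E * P)%N.
  move=> [|E] m hm; rewrite /fF /=; first by rewrite mul1n.
  by rewrite expnS (mulnC 2) -mulnA ltn_pmul2l ?expn_gt0 //; lia.
have lo : forall E m, (0 < E)%N -> (2 ^ E.-1 * P <= fF P E m)%N.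
  move=> [|E] m //= _; rewrite /fF /=. by rewrite leq_mul2l leq_addr orbT.
case: (ltngtP Ex Ey) => hE.
- apply: (leq_trans (up _ _ hx)). apply: leq_trans (lo _ _ _); last by lia.
  by rewrite leq_mul2r leq_pexp2l //; lia.
- have : (Ey.+1 * P <= Ex * P)%N by rewrite leq_mul2r hE orbT.
  rewrite mulSn; lia.
- subst Ey; have hm : (mx < my)%N by lia.
  rewrite /fF; case: ifP => // _.
  by rewrite ltn_pmul2l ?expn_gt0 // ltn_add2l.
Qed.

Definition fp_lt u v := fp_le u v && ~~ fp_le v u.

Arguments cst : simpl never.

Lemma cst_gt0 e s : (0 < cst e s)%R.
Proof. by rewrite /cst divr_gt0 ?exprz_gt0 ?ltr0n ?expn_gt0. Qed.

Lemma Lmono e s x y : (1 < e)%N -> (1 < s)%N -> size x = (e + s)%N -> size y = (e + s)%N ->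
  ~~ is_nan (fp_value e s x) -> ~~ is_nan (fp_value e s y) ->
  nth false x 0 = nth false y 0 ->
  (bits_to_nat (drop 1 x) < bits_to_nat (drop 1 y))%N ->
  if nth false x 0 then fp_lt (fp_value e s y) (fp_value e s x)
  else fp_lt (fp_value e s x) (fp_value e s y).
Proof.
move=> he hs sx sy nx ny sg hN.
rewrite (Nsplit _ _ _ sx) (Nsplit _ _ _ sy) in hN.
have s0 : (0 < s)%N by lia.
have mx := Mlt _ _ _ sx; have my := Mlt _ _ _ sy; have ex := Elt _ _ _ s0 sx; have ey := Elt _ _ _ s0 sy.
have P0 : (0 < 2 ^ s.-1)%N by rewrite expn_gt0.
have exy : (fE e x <= fE e y)%N.
  rewrite leqNgt; apply/negP => h.
  have : ((fE e y).+1 * 2 ^ s.-1 <= fE e x * 2 ^ s.-1)%N by rewrite leq_mul2r h orbT.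
  rewrite mulSn; lia.
have c0 := cst_gt0 e s.
move: nx ny; rewrite !decode -sg.
have [Ey|Ey] := eqVneq (fE e y) ((2^e).-1).
- case: (fM e y =P 0%N) => My //= _.
  have Ex : fE e x != (2^e).-1.
    by apply/eqP => Ex; rewrite Ex Ey My in hN; lia.
  rewrite (negbTE Ex) => _. by case: (nth false x 0).
- have Ex : fE e x != (2^e).-1.
    apply/eqP => Ex. move/eqP: Ey => Ey. lia.
  rewrite (negbTE Ex) => _ _.
  have hf := Fmono _ _ _ _ _ P0 mx my hN.
  have hlt : (cst e s * (fF (2 ^ s.-1) (fE e x) (fM e x))%:R <
              cst e s * (fF (2 ^ s.-1) (fE e y) (fM e y))%:R)%R.
    by rewrite ltr_pM2l // ltr_nat.
  move: hlt; generalize (cst e s) => c hlt.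
  case: (nth false x 0); rewrite /fp_lt /=.
  + by rewrite expr1 -!mulrA !mulN1r !lerN2 -ltNge hlt (ltW hlt).
  + by rewrite expr0 -!mulrA !mul1r -ltNge hlt (ltW hlt).
Qed.

Lemma G0 e s x y : nth false x 0 = true -> nth false y 0 = false ->
  ~~ is_nan (fp_value e s x) -> ~~ is_nan (fp_value e s y) ->
  fp_le (fp_value e s x) (fp_value e s y).
Proof.
move=> hx hy; rewrite !decode hx hy.
have c0 := cst_gt0 e s.
do ! case: ifP => //= _.
move=> _ _; move: c0; generalize (cst e s) => c c0.
rewrite expr1 expr0 mulN1r mul1r mulNr; apply: (@le_trans _ _ 0%R).
  by rewrite oppr_le0 mulr_ge0 // ltW.
by rewrite mulr_ge0 // ltW.
Qed.

Lemma Gk e s k x y : (1 < e)%N -> (1 < s)%N -> size x = (e + s)%N -> size y = (e + s)%N ->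
  ~~ is_nan (fp_value e s x) -> ~~ is_nan (fp_value e s y) ->
  (0 < k)%N -> (k < e + s)%N -> take k x = take k y ->
  nth false x k = nth false x 0 -> nth false y k = ~~ nth false x 0 ->
  fp_lt (fp_value e s x) (fp_value e s y).
Proof.
move=> he hs sx sy nnx nny k0 kn htk hxk hyk.
have sg : nth false y 0 = nth false x 0 by rewrite -(nth_take _ k0 y) -htk nth_take.
have Tk : take k.-1 (drop 1 x) = take k.-1 (drop 1 y) by rewrite !take_drop addn1 prednK // htk.
have sd : size (drop 1 x) = size (drop 1 y) by rewrite !size_drop sx sy.
have jk : (k.-1 < size (drop 1 x))%N by rewrite size_drop sx; lia.
have nx : nth false (drop 1 x) k.-1 = nth false x k by rewrite nth_drop add1n prednK.
have ny : nth false (drop 1 y) k.-1 = nth false y k by rewrite nth_drop add1n prednK.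
case sgx: (nth false x 0) in hxk hyk.
- have hN : (bits_to_nat (drop 1 y) < bits_to_nat (drop 1 x))%N.
    by apply: (bits_lex _ _ k.-1); rewrite -?sd ?ny ?nx // Tk.
  by have := Lmono _ _ _ _ he hs sy sx nny nnx (etrans sg (esym (etrans sgx (esym sgx)))) hN; rewrite sg sgx.
- have hN : (bits_to_nat (drop 1 x) < bits_to_nat (drop 1 y))%N.
    by apply: (bits_lex _ _ k.-1); rewrite ?ny ?nx // Tk.
  by have := Lmono _ _ _ _ he hs sx sy nnx nny (esym sg) hN; rewrite sgx.
Qed.

Lemma bits_true n : bits_to_nat (nseq n true) = (2 ^ n).-1.
Proof.
elim: n => // n IH; rewrite /= bits_cons size_nseq IH expnS.
have h : (0 < 2 ^ n)%N by rewrite expn_gt0. lia.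
Qed.

Lemma bits_false n : bits_to_nat (nseq n false) = 0%N.
Proof. by elim: n => // n IH; rewrite /= bits_cons IH. Qed.

Lemma infpat_val e s sg : fp_value e s (sg :: nseq e true ++ nseq s.-1 false) = FPinf sg.
Proof.
rewrite /fp_value /= drop0 take_size_cat ?size_nseq // drop_size_cat ?size_nseq //.
by rewrite bits_true bits_false eqxx.
Qed.

Lemma not_le_minf e s x : nth false x 0 = false -> fp_le (fp_value e s x) (FPinf true) = false.
Proof. by move=> hx; rewrite decode hx; do ! case: ifP => //. Qed.

Lemma not_pinf_le e s x : nth false x 0 = true -> fp_le (FPinf false) (fp_value e s x) = false.
Proof. by move=> hx; rewrite decode hx; do ! case: ifP => //. Qed.

Theorem lemma1 (e s : nat) (He : (1 < e)%N) (Hs : (1 < s)%N) (maximize : bool)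
    (Model : Type) (phi : Model -> Prop) (cost : Model -> (e + s).-tuple bool)
    (Hsat : exists M0, phi M0 /\ ~~ is_nan (fp_value e s (cost M0)))
    (k : nat) (Hk : (k < e + s)%N) (tau : k.-tuple bool) (d : (e + s).-tuple bool)
    (Hd : is_dyn_attractor e s maximize tau d) (M M' : Model)
    (HM : [/\ phi M, ~~ is_nan (fp_value e s (cost M)) &
              agrees_prefix (cost M) (rcons tau (nth false d k))])
    (HM' : [/\ phi M', ~~ is_nan (fp_value e s (cost M')) &
              agrees_prefix (cost M') (rcons tau (~~ nth false d k))]) :
  fp_better maximize (fp_value e s (cost M)) (fp_value e s (cost M')).
Proof.
case: HM => _ nanA preA; case: HM' => _ nanB preB.
case: Hd => nanD preD bestD.
have szt : size tau = k := size_tuple tau.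
have ext : forall (x : (e + s).-tuple bool) c, agrees_prefix x (rcons tau c) ->
    take k x = tau /\ nth false x k = c.
  move=> x c; rewrite /agrees_prefix size_rcons szt (take_nth false) ?size_tuple //.
  by move/eqP; rewrite eqseq_rcons => /andP[/eqP -> /eqP ->].
have [tA nA] := ext _ _ preA; have [tB nB] := ext _ _ preB.
have tD : take k d = tau by move: preD; rewrite /agrees_prefix szt.
have agr : forall x : (e + s).-tuple bool, take k x = tau -> agrees_prefix x tau.
  by move=> x h; rewrite /agrees_prefix size_tuple.
have bA := bestD _ nanA (agr _ tA); have bB := bestD _ nanB (agr _ tB).
set a := cost M in nanA tA nA bA *; set b := cost M' in nanB tB nB bB *.
set dk := nth false d k in nA nB.
have sa : size a = (e + s)%N := size_tuple a.
have sb : size b = (e + s)%N := size_tuple b.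
have sd : size d = (e + s)%N := size_tuple d.
case: (posnP k) => k0.
-
  have s0 : (0 < s)%N by lia.
  have szp : forall sg, size (sg :: nseq e true ++ nseq s.-1 false) == (e + s)%N.
    by move=> sg; rewrite /= size_cat !size_nseq; apply/eqP; lia.
  have agr0 : forall x : (e + s).-tuple bool, agrees_prefix x tau.
    by move=> x; rewrite /agrees_prefix size_tuple; move: (tau) ; rewrite k0 => t; rewrite take0 (tuple0 t).
  rewrite k0 in nA nB.
  case: maximize bestD bA bB => /= bestD bA bB.
  + have h1 : ~~ is_nan (fp_value e s (Tuple (szp false))) by rewrite /= infpat_val.
    have := bestD (Tuple (szp false)) h1 (agr0 _).
    rewrite /= infpat_val.
    case hd: (nth false d 0); first by rewrite not_pinf_le.
    move=> _; rewrite /dk k0 hd in nA nB.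
    by apply: G0.
  + have h1 : ~~ is_nan (fp_value e s (Tuple (szp true))) by rewrite /= infpat_val.
    have := bestD (Tuple (szp true)) h1 (agr0 _).
    rewrite /= infpat_val.
    case hd: (nth false d 0); last by rewrite not_le_minf.
    move=> _; rewrite /dk k0 hd in nA nB.
    by apply: G0.
- have tAD : take k a = take k d by rewrite tA tD.
  have tBD : take k b = take k d by rewrite tB tD.
  have sgA : nth false a 0 = nth false d 0 by rewrite -(nth_take _ k0 a) tAD nth_take.
  have sgB : nth false b 0 = nth false d 0 by rewrite -(nth_take _ k0 b) tBD nth_take.
  have [hdk|hdk] := boolP (dk == nth false d 0).
  + move/eqP: hdk => hdk.
    case: maximize bestD bA bB => /= bestD bA bB.
    * have := Gk _ _ _ _ _ He Hs sd sb nanD nanB k0 Hk (esym tBD) hdk.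
      rewrite nB hdk => /(_ erefl) /andP[_ /negP]; by [].
    * have := Gk _ _ _ _ _ He Hs sa sb nanA nanB k0 Hk (etrans tAD (esym tBD)).
      by rewrite nA nB sgA hdk => /(_ erefl erefl) /andP[].
  + have hdk' : dk = ~~ nth false d 0 by move: hdk; case: (dk); case: (nth false d 0).
    case: maximize bestD bA bB => /= bestD bA bB.
    * have := Gk _ _ _ _ _ He Hs sb sa nanB nanA k0 Hk (etrans tBD (esym tAD)).
      by rewrite nA nB sgB hdk' negbK => /(_ erefl erefl) /andP[].
    * have := Gk _ _ _ _ _ He Hs sb sd nanB nanD k0 Hk tBD.
      rewrite nB hdk' negbK sgB => /(_ erefl hdk') /andP[_ /negP]; by [].
Qed.
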